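(* Let $n\ge 2$, and consider words in the free monoid $F_n$ on the letters $g_i,g_i^{-1},e_i$ ($1\le i\le n-1$). A move $u\leftrightarrow v$ means replacing a contiguous subword equal to $u$ by $v$ or vice versa. Consider the moves, for $\epsilon\in\{+1,-1\}$ and $i,j\in\{1,\dots,n-1\}$: (M6) $g_i^{\epsilon}g_j^{\epsilon}e_i\leftrightarrow e_je_i$ for $|i-j|=1$; (M7) $e_ig_j^{\epsilon}g_i^{\epsilon}\leftrightarrow e_ie_j$ for $|i-j|=1$; (M20) $e_i\leftrightarrow g_i^{\epsilon}e_i$; (M21) $e_i\leftrightarrow e_ig_i^{\epsilon}$. Then the following moves are realized by finite sequences of the moves (M6), (M7), (M20), (M21): (a) $g_i^{\epsilon}g_j^{\epsilon}e_i\leftrightarrow e_jg_i^{\delta}g_j^{\delta}$ for all $\epsilon,\delta\in\{+1,-1\}$ and $|i-j|=1$; (b) $e_i\leftrightarrow g_i^{k}e_i$ for all $k\in\mathbb Z$; (c) $e_i\leftrightarrow e_ig_i^{k}$ for all $k\in\mathbb Z$.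
   Context: $F_n$ is the free monoid generated by the symbols $g_i,g_i^{-1},e_i$ ($i=1,\dots,n-1$). For $k>0$, $g_i^k$ denotes the word $g_i\cdots g_i$ ($k$ letters), $g_i^{-k}$ denotes $g_i^{-1}\cdots g_i^{-1}$ ($k$ letters), and $g_i^0$ is the empty word. *)

(* Defs.v *)
From mathcomp Require Import all_boot all_order all_algebra.
From Stdlib Require Import Relations.
Set Implicit Arguments. Unset Strict Implicit. Unset Printing Implicit Defensive.

(* Letters of the free monoid F_n: g_i, g_i^{-1}, e_i, with index i : nat
   (meaningful for 1 <= i <= n-1). *)
Inductive letter : Type :=
| Gp of nat
| Gm of nat
| E  of nat.

Definition idx (x : letter) : nat :=
  match x with Gp i | Gm i | E i => i end.

Definition in_Fn (n : nat) (w : seq letter) : Prop :=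
  all (fun x => (1 <= idx x) && (idx x <= n - 1)) w.

Definition valid_idx (n i : nat) : Prop := (1 <= i)%N /\ (i <= n - 1)%N.

(* g_i^eps, eps = true for +1 and false for -1 *)
Definition gsign (i : nat) (eps : bool) : letter := if eps then Gp i else Gm i.

Definition gpow (i : nat) (k : int) : seq letter :=
  match k with
  | Posz m => nseq m (Gp i)
  | Negz m => nseq m.+1 (Gm i)
  end.

Definition adjacent (i j : nat) : Prop := i = j.+1 \/ j = i.+1.

Inductive basic_move (n : nat) : seq letter -> seq letter -> Prop :=
| M6 (eps : bool) (i j : nat) :
    valid_idx n i -> valid_idx n j -> adjacent i j ->
    basic_move n [:: gsign i eps; gsign j eps; E i] [:: E j; E i]
| M7 (eps : bool) (i j : nat) :
    valid_idx n i -> valid_idx n j -> adjacent i j ->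
    basic_move n [:: E i; gsign j eps; gsign i eps] [:: E i; E j]
| M20 (eps : bool) (i : nat) :
    valid_idx n i -> basic_move n [:: E i] [:: gsign i eps; E i]
| M21 (eps : bool) (i : nat) :
    valid_idx n i -> basic_move n [:: E i] [:: E i; gsign i eps].

Definition step (n : nat) (w w' : seq letter) : Prop :=
  exists a b u v, in_Fn n a /\ in_Fn n b /\
    (basic_move n u v \/ basic_move n v u) /\
    w = a ++ u ++ b /\ w' = a ++ v ++ b.

Definition reach (n : nat) : relation (seq letter) := clos_refl_trans _ (step n).

(* Main.v *)
Require Import Defs.
From mathcomp Require Import all_boot all_order all_algebra.
From Stdlib Require Import Relations.

Definition creach n (u v : seq letter) : Prop :=
  forall a b, in_Fn n a -> in_Fn n b -> reach n (a ++ u ++ b) (a ++ v ++ b).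

Lemma in_Fn_cat n p q : in_Fn n p -> in_Fn n q -> in_Fn n (p ++ q).
Proof. by rewrite /in_Fn all_cat => -> ->. Qed.

Lemma reach_sym n x y : reach n x y -> reach n y x.
Proof.
elim => [x' y' Hs|x'|x' y' z' _ H1 _ H2].
- move: Hs => [a [b [u [v [Ha [Hb [Hm [-> ->]]]]]]]].
  apply: rt_step; rewrite /step; exists a, b, v, u; split; [done|split; [done|split; [by case: Hm; auto|done]]].
- exact: rt_refl.
- exact: rt_trans H2 H1.
Qed.

Lemma creach_sym n u v : creach n u v -> creach n v u.
Proof. move=> H a b Ha Hb; apply: reach_sym; exact: H. Qed.

Lemma creach_trans n u v w : creach n u v -> creach n v w -> creach n u w.
Proof. move=> H1 H2 a b Ha Hb; apply: rt_trans (H1 a b Ha Hb) (H2 a b Ha Hb). Qed.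

Lemma creach_refl n u : creach n u u.
Proof. move=> a b _ _; exact: rt_refl. Qed.

Lemma creach_ctx n p q u v : in_Fn n p -> in_Fn n q -> creach n u v ->
  creach n (p ++ u ++ q) (p ++ v ++ q).
Proof.
move=> Hp Hq H a b Ha Hb.
have E1 : forall w, a ++ (p ++ w ++ q) ++ b = (a ++ p) ++ w ++ (q ++ b).
  by move=> w; rewrite !catA.
rewrite !E1; apply: H; exact: in_Fn_cat.
Qed.

Lemma creach_move n u v : basic_move n u v -> creach n u v.
Proof. move=> H a b Ha Hb; apply: rt_step; rewrite /step; exists a, b, u, v; auto. Qed.

Arguments creach_move {n u v}.
Arguments creach_trans {n u v w}.
Arguments creach_sym {n u v}.
Arguments creach_ctx {n p q u v}.

Lemma in_Fn_g n i eps : valid_idx n i -> in_Fn n [:: gsign i eps].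
Proof. by case=> h1 h2; case: eps; rewrite /in_Fn /= h1 h2. Qed.

Arguments in_Fn_g {n i}.

Lemma in_Fn_nil n : in_Fn n [::].
Proof. by []. Qed.

Lemma nseq_rcons (T : Type) m (x : T) : nseq m x ++ [:: x] = x :: nseq m x.
Proof. by elim: m => //= m ->. Qed.

Lemma powl n i eps m : valid_idx n i ->
  creach n [:: E i] (nseq m (gsign i eps) ++ [:: E i]).
Proof.
move=> Hi; elim: m => [|m IH] /=; first exact: creach_refl.
apply: creach_trans (creach_move (M20 eps Hi)) _.
have := creach_ctx (in_Fn_g eps Hi) (in_Fn_nil n) IH.
by rewrite /= ?cats0.
Qed.

Lemma powr n i eps m : valid_idx n i ->
  creach n [:: E i] ([:: E i] ++ nseq m (gsign i eps)).
Proof.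
move=> Hi; elim: m => [|m IH] /=; first by rewrite ?cats0; exact: creach_refl.
apply: creach_trans (creach_move (M21 eps Hi)) _.
have := creach_ctx (in_Fn_nil n) (in_Fn_g eps Hi) IH.
by rewrite /= nseq_rcons.
Qed.

Theorem lemma5p4 (n : nat) (hn : (2 <= n)%N) :
  (* (a) *)
  (forall (eps delta : bool) (i j : nat),
     valid_idx n i -> valid_idx n j -> adjacent i j ->
     forall a b, in_Fn n a -> in_Fn n b ->
       reach n (a ++ [:: gsign i eps; gsign j eps; E i] ++ b)
               (a ++ [:: E j; gsign i delta; gsign j delta] ++ b) /\
       reach n (a ++ [:: E j; gsign i delta; gsign j delta] ++ b)
               (a ++ [:: gsign i eps; gsign j eps; E i] ++ b)) /\
  (* (b) *)
  (forall (i : nat) (k : int), valid_idx n i ->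
     forall a b, in_Fn n a -> in_Fn n b ->
       reach n (a ++ [:: E i] ++ b) (a ++ (gpow i k ++ [:: E i]) ++ b) /\
       reach n (a ++ (gpow i k ++ [:: E i]) ++ b) (a ++ [:: E i] ++ b)) /\
  (* (c) *)
  (forall (i : nat) (k : int), valid_idx n i ->
     forall a b, in_Fn n a -> in_Fn n b ->
       reach n (a ++ [:: E i] ++ b) (a ++ ([:: E i] ++ gpow i k) ++ b) /\
       reach n (a ++ ([:: E i] ++ gpow i k) ++ b) (a ++ [:: E i] ++ b)).
Proof.
split; [|split].
- move=> eps delta i j Hi Hj Hij a b Ha Hb.
  have Hji : adjacent j i by case: Hij; [right|left].
  have H : creach n [:: gsign i eps; gsign j eps; E i]
                    [:: E j; gsign i delta; gsign j delta].
    apply: creach_trans (creach_move (M6 eps Hi Hj Hij)) _.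
    exact: creach_sym (creach_move (M7 delta Hj Hi Hji)).
  by split; [apply: H | apply: (creach_sym H)].
- move=> i k Hi a b Ha Hb.
  have H : creach n [:: E i] (gpow i k ++ [:: E i]).
    case: k => m; [exact: (@powl n i true m Hi) | exact: (@powl n i false m.+1 Hi)].
  by split; [apply: H | apply: (creach_sym H)].
- move=> i k Hi a b Ha Hb.
  have H : creach n [:: E i] ([:: E i] ++ gpow i k).
    case: k => m; [exact: (@powr n i true m Hi) | exact: (@powr n i false m.+1 Hi)].
  by split; [apply: H | apply: (creach_sym H)].
Qed.
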